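(* Assume $a_T/T\to\infty$. Let $\hat c_{\mathrm R}(x,\mathbb P,T)=\max_{i\in\Sigma}\ell(x,i)$ and $\hat x^{\mathrm R}_T(\mathbb P)\in\arg\min_{x\in\mathcal X}\max_{i\in\Sigma}\ell(x,i)$. Then $(\hat c_{\mathrm R},\hat x^{\mathrm R})$ is a predictor–prescriptor pair satisfying the prescription out-of-sample guarantee with speed $(a_T)$, and for every predictor–prescriptor pair $(\hat c,\hat x)$ satisfying the prescription out-of-sample guarantee with speed $(a_T)$ we have $(\hat c_{\mathrm R},\hat x^{\mathrm R})\preceq_{\hat{\mathcal X}}(\hat c,\hat x)$.
   Context: Setting: $\Sigma=\{1,\dots,d\}$ ($d\ge2$) is finite; $\mathcal P\subset\mathbb R^d$ is the probability simplex over $\Sigma$ and $\mathcal P^o$ its relative interior (all entries positive). $\mathcal X\subset\mathbb R^n$ is compact and $\ell:\mathcal X\times\Sigma\to\mathbb R$ is continuous in $x$ for each $i$. For $x\in\mathcal X$, $\mu\in\mathbb R^d$ let $c(x,\mu)=\sum_{i\in\Sigma}\ell(x,i)\mu(i)$ and $c^\star(\mathbb P)=\min_{x\in\mathcal X}c(x,\mathbb P)$. Data $\xi_1,\xi_2,\dots$ are i.i.d. with law $\mathbb P\in\mathcal P$, $\mathbb P^\infty$ denotes their joint law, and $\hat{\mathbb P}_T(i)=\frac1T\sum_{t=1}^T\mathbf 1\{\xi_t=i\}$. $(a_T)_{T\ge1}$ is a sequence of positive reals with $a_T\to\infty$. A predictor is a sequence $\hat c=(\hat c(\cdot,\cdot,T))_{T\in\mathbb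 N}$ of functions $\mathcal X\times\mathcal P\to\mathbb R$. It is regular, written $\hat c\in\mathcal C$, if (i) the sequence $(\hat c(\cdot,\cdot,T))_T$ is uniformly bounded and equicontinuous on $\mathcal X\times\mathcal P$, and (ii) each $\hat c(x,\cdot,T)$ is differentiable in $\mathbb P$ and the sequence of derivative maps $(x,\mathbb P)\mapsto\nabla_{\mathbb P}\hat c(x,\mathbb P,T)$ is uniformly bounded and equicontinuous. (A sequence $(f_T)$ is equicontinuous if for every point $y$ and $\varepsilon>0$ there is a neighbourhood $U$ of $y$ with $|f_T(y)-f_T(z)|<\varepsilon$ for all $z\in U$ and all $T$.) A predictor–prescriptor pair $(\hat c,\hat x)$ consists of $\hat c\in\mathcal C$ and functions $\hat x_T:\mathcal P\to\mathcal X$ with $\hat x_T(\mathbb P)\in\arg\min_{x\in\mathcal X}\hat c(x,\mathbb P,T)$ for all $\mathbb P,T$; put $\hat c^\star(\mathbb P,T)=\hat c(\hat x_T(\mathbb P),\mathbb P,T)$. Prescription out-of-sample guarantee with speed $(a_T)$: for all $\mathbb P\in\mathcal P^o$, $\limsup_{T\to\infty}\frac1{a_T}\log\mathbb P^\infty\big(c(\hat x_T(\hat{\mathbb P}_T),\mathbb P)>\hat c^\star(\hat{\mathbb P}_T,T)\big)\le-1$. Order: $(\hat c_1,\hat x_1)\preceq_{\hat{\mathcal X}}(\hat c_2,\hat x_2)$ iff for all $\mathbb P\in\mathcal P^o$, $\limsup_{T\to\infty}\frac{|\hat c_1^\star(\mathbb P,T)-c^\star(\mathbb P)|}{|\hat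 c_2^\star(\mathbb P,T)-c^\star(\mathbb P)|}\le1$ (convention $0/0=1$). *)

(* Defs.v *)
From HB Require Import structures.
From mathcomp Require Import all_boot all_order all_algebra.
From mathcomp Require Import all_classical all_reals all_analysis.
Set Implicit Arguments. Unset Strict Implicit. Unset Printing Implicit Defensive.
Import Order.TTheory GRing.Theory Num.Theory.
Import numFieldNormedType.Exports.
Local Open Scope classical_set_scope.
Local Open Scope ring_scope.

Section Defs.
Variable R : realType.
Variables (n d : nat).
(* decisions x live in 'rV[R]_n, distributions / vectors mu live in 'rV[R]_d,
   Sigma = 'I_d, a loss is l : 'rV_n -> 'I_d -> R. *)

Definition simplex (P : 'rV[R]_d) : Prop :=
  (forall i, 0 <= P ord0 i) /\ \sum_i P ord0 i = 1.
Definition simplex_int (P : 'rV[R]_d) : Prop :=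
  (forall i, 0 < P ord0 i) /\ \sum_i P ord0 i = 1.

Definition cost (l : 'rV[R]_n -> 'I_d -> R) (x : 'rV[R]_n) (mu : 'rV[R]_d) : R :=
  \sum_i l x i * mu ord0 i.

(* c*(P) = min_{x in X} c(x,P)  (the inf is attained: X compact, c continuous) *)
Definition cstar (X : set 'rV[R]_n) (l : 'rV[R]_n -> 'I_d -> R) (P : 'rV[R]_d) : R :=
  inf [set cost l x P | x in X].

Definition maxloss (l : 'rV[R]_n -> 'I_d -> R) (x : 'rV[R]_n) : R :=
  (match d return ('I_d -> R) -> R with
   | 0 => fun _ => 0
   | d'.+1 => fun f => \big[Num.max/f ord0]_(i < d'.+1) f i
   end) (l x).

Definition predictor := 'rV[R]_n -> 'rV[R]_d -> nat -> R.
Definition prescriptor := nat -> 'rV[R]_d -> 'rV[R]_n.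

Definition unif_bounded (X : set 'rV[R]_n) (f : 'rV[R]_n -> 'rV[R]_d -> nat -> R) :=
  exists M : R, forall x P T, X x -> simplex P -> `|f x P T| <= M.
Definition equicont (X : set 'rV[R]_n) (f : 'rV[R]_n -> 'rV[R]_d -> nat -> R) :=
  forall x P, X x -> simplex P -> forall eps : R, 0 < eps ->
    exists2 delta : R, 0 < delta &
      forall y Q, X y -> simplex Q -> `|y - x| < delta -> `|Q - P| < delta ->
        forall T, `|f x P T - f y Q T| < eps.

Definition is_gradient (X : set 'rV[R]_n) (chat : predictor)
    (g : 'rV[R]_n -> 'rV[R]_d -> nat -> 'rV[R]_d) :=
  forall x P T, X x -> simplex P -> forall eps : R, 0 < eps ->
    exists2 delta : R, 0 < delta &
      forall Q, simplex Q -> `|Q - P| < delta ->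
        `|chat x Q T - chat x P T - \sum_i g x P T ord0 i * (Q ord0 i - P ord0 i)|
          <= eps * `|Q - P|.

Definition regular (X : set 'rV[R]_n) (chat : predictor) : Prop :=
  unif_bounded X chat /\ equicont X chat /\
  exists g : 'rV[R]_n -> 'rV[R]_d -> nat -> 'rV[R]_d,
    is_gradient X chat g /\
    (forall i, unif_bounded X (fun x P T => g x P T ord0 i)) /\
    (forall i, equicont X (fun x P T => g x P T ord0 i)).

Definition pp_pair (X : set 'rV[R]_n) (chat : predictor) (xhat : prescriptor) : Prop :=
  regular X chat /\
  forall P T, simplex P ->
    X (xhat T P) /\ forall y, X y -> chat (xhat T P) P T <= chat y P T.

Definition chat_star (chat : predictor) (xhat : prescriptor) (P : 'rV[R]_d) (T : nat) : R :=
  chat (xhat T P) P T.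

Definition empirical (T : nat) (s : {ffun 'I_T -> 'I_d}) : 'rV[R]_d :=
  \row_i (#|[set t | s t == i]|%:R / T%:R).

(* P^oo(E) for an event E depending on the first T samples, xi_t i.i.d. ~ P *)
Definition probT (P : 'rV[R]_d) (T : nat) (E : {ffun 'I_T -> 'I_d} -> bool) : R :=
  \sum_(s : {ffun 'I_T -> 'I_d} | E s) \prod_(t < T) P ord0 (s t).

Definition elog (p : R) : \bar R := if p == 0 then (-oo)%E else (ln p)%:E.

Definition oos_guarantee (l : 'rV[R]_n -> 'I_d -> R) (a : nat -> R)
    (chat : predictor) (xhat : prescriptor) : Prop :=
  forall P, simplex_int P ->
    (limn_esup (fun T : nat =>
       ((a T)^-1)%:E *
       elog (probT P (fun s : {ffun 'I_T -> 'I_d} =>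
               (cost l (xhat T (empirical s)) P >
                chat_star chat xhat (empirical s) T)%R))) <= (-1)%:E)%E.

Definition eratio (u v : R) : \bar R :=
  if v == 0 then (if u == 0 then 1%E else (+oo)%E) else (u / v)%:E.

Definition pp_le (X : set 'rV[R]_n) (l : 'rV[R]_n -> 'I_d -> R)
    (c1 : predictor) (x1 : prescriptor) (c2 : predictor) (x2 : prescriptor) : Prop :=
  forall P, simplex_int P ->
    (limn_esup (fun T : nat =>
       eratio `|chat_star c1 x1 P T - cstar X l P|%R
              `|chat_star c2 x2 P T - cstar X l P|%R) <= 1%E)%E.

End Defs.

(* Main.v *)
Require Import Defs.
From HB Require Import structures.
From mathcomp Require Import all_boot all_order all_algebra.
From mathcomp Require Import all_classical all_reals all_analysis.
From mathcomp Require Import ring lra.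
Import Order.TTheory GRing.Theory Num.Theory.
Import numFieldNormedType.Exports.
Local Open Scope classical_set_scope.
Local Open Scope ring_scope.
Set Implicit Arguments. Unset Strict Implicit. Unset Printing Implicit Defensive.

Section S.
Variables (R : realType) (n d : nat).

Lemma maxloss_ge (l : 'rV[R]_n -> 'I_d.+1 -> R) x i : l x i <= maxloss l x.
Proof. by rewrite /maxloss; apply: le_bigmax. Qed.

Lemma maxloss_attain (l : 'rV[R]_n -> 'I_d.+1 -> R) x : exists i, maxloss l x = l x i.
Proof.
rewrite /maxloss.
apply: (big_rec (fun m => exists i, m = l x i)); first by exists ord0.
move=> i m _ [j ->].
by case: (leP (l x i) (l x j)) => _; [exists j|exists i].
Qed.

Lemma within_near (X : set 'rV[R]_n) (f : 'rV[R]_n -> R) x : {within X, continuous f} -> X x ->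
  forall eps, 0 < eps -> \forall y \near x, X y -> `|f x - f y| < eps.
Proof.
move=> hf Xx eps e0.
have := (subspace_continuousP _ _).1 hf x Xx.
by move/cvgrPdist_lt => /(_ eps e0).
Qed.

Lemma maxloss_cont (X : set 'rV[R]_n) (l : 'rV[R]_n -> 'I_d.+1 -> R)
  (hl : forall i, {within X, continuous (fun x => l x i)}) x : X x ->
  forall eps, 0 < eps -> exists2 delta, 0 < delta &
    forall y, X y -> `|y - x| < delta -> `|maxloss l x - maxloss l y| < eps.
Proof.
move=> Xx eps e0.
have : \forall y \near x, forall i, X y -> `|l x i - l y i| < eps.
  apply: (@filter_forall _ _ (fun i y => X y -> `|l x i - l y i| < eps) (nbhs x) _) => i.
  exact: (@within_near X (fun y => l y i) x (hl i) Xx eps e0).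
move/nbhs_ballP => [delta d0 Hd]; exists delta => // y Xy hy.
have /Hd H : ball x delta y by rewrite -ball_normE /ball_ /= distrC.
have [i ei] := maxloss_attain l x; have [j ej] := maxloss_attain l y.
rewrite ltr_norml; apply/andP; split.
  have := H j Xy; rewrite ltr_norml => /andP[h1 _].
  have := maxloss_ge l x j; rewrite ej; lra.
have := H i Xy; rewrite ltr_norml => /andP[_ h2].
have := maxloss_ge l y i; rewrite ei; lra.
Qed.

Lemma bound1 (X : set 'rV[R]_n) (f : 'rV[R]_n -> R) : compact X -> {within X, continuous f} ->
  exists M, forall x, X x -> `|f x| <= M.
Proof.
move=> hX hf.
have := compact_bounded (continuous_compact hf hX).
case=> M [_ HM].
exists (M + 1) => x Xx.
have := HM (M+1); rewrite ltrDl ltr01 => /(_ isT); apply.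
by exists x.
Qed.

Lemma bound_all (X : set 'rV[R]_n) (l : 'rV[R]_n -> 'I_d -> R) : compact X ->
  (forall i, {within X, continuous (fun x => l x i)}) ->
  exists M, 0 <= M /\ forall x i, X x -> `|l x i| <= M.
Proof.
move=> hX hl.
have /choice [Mf HM] : forall i, exists M, forall x, X x -> `|l x i| <= M.
  by move=> i; apply: bound1.
exists (\big[Num.max/0]_i Mf i); split.
  by elim/big_rec: _ => // i m _ hm; rewrite le_max hm orbT.
move=> x i Xx; apply: le_trans (HM i x Xx) _.
exact: (le_bigmax (0:R) Mf i).
Qed.
End S.
Section S.
Variables (R : realType).
Local Open Scope ereal_scope.
Lemma esup_le (u : nat -> \bar R) c : (\forall T \near \oo, u T <= c) -> limn_esup u <= c.
Proof.
move=> H; rewrite /limn_esup limf_esupE.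
apply: le_trans (ereal_inf_lbound _) _; first by exists [set T | u T <= c].
by apply: ge_ereal_sup => _ [T hT <-].
Qed.
Lemma esup_lt (u : nat -> \bar R) c : limn_esup u < c -> \forall T \near \oo, u T < c.
Proof.
rewrite /limn_esup limf_esupE => /ereal_inf_lt [_ [V hV <-] hlt].
apply: filterS hV => T VT; apply: le_lt_trans hlt.
by apply: ereal_sup_ubound; exists T.
Qed.
End S.
Section P12.
Variables (R : realType) (n d : nat).
Lemma cost_le_max (l : 'rV[R]_n -> 'I_d.+1 -> R) x P : simplex P -> cost l x P <= maxloss l x.
Proof.
move=> [P0 P1]; rewrite /cost.
apply: le_trans (_ : \sum_i maxloss l x * P ord0 i <= _).
  by apply: ler_sum => i _; apply: ler_wpM2r => //; apply: maxloss_ge.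
by rewrite -mulr_sumr P1 mulr1.
Qed.

Lemma part1 (X : set 'rV[R]_n) (hXc : compact X) (l : 'rV[R]_n -> 'I_d.+1 -> R)
  (hl : forall i, {within X, continuous (fun x => l x i)})
  (xR : prescriptor R n d.+1)
  (hxR : forall T P, X (xR T P) /\
           forall y, X y -> maxloss l (xR T P) <= maxloss l y) :
  pp_pair X (fun x _ _ => maxloss l x) xR.
Proof.
split; last first.
  by move=> P T _; have [h1 h2] := hxR T P; split.
split.
  have [M [M0 HM]] := bound_all hXc hl.
  exists M => x P T Xx _; have [i ->] := maxloss_attain l x; exact: HM.
split.
  move=> x P Xx _ eps e0; have [delta d0 Hd] := maxloss_cont hl Xx e0.
  by exists delta => // y Q Xy _ hy _ T; apply: Hd.
exists (fun _ _ _ => 0); split.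
  move=> x P T _ _ eps e0; exists 1 => // Q _ _.
  rewrite big1 => [|i _]; last by rewrite mxE mul0r.
  by rewrite !subrr normr0 mulr_ge0 // ltW.
split.
  by move=> i; exists 0 => *; rewrite mxE normr0.
move=> i x P _ _ eps e0; exists 1 => // *.
by rewrite !mxE subrr normr0.
Qed.

Lemma part2 (l : 'rV[R]_n -> 'I_d.+1 -> R) (a : nat -> R) (ha_pos : forall T, (0 < T)%N -> 0 < a T)
  (xR : prescriptor R n d.+1) : oos_guarantee l a (fun x _ _ => maxloss l x) xR.
Proof.
move=> P [P0 P1]; apply: esup_le; near=> T.
rewrite /probT big_pred0; last first.
  move=> s; rewrite /chat_star; apply/negbTE; rewrite -leNgt.
  by apply: cost_le_max; split => // i; apply/ltW.
rewrite /elog eqxx mulrNy gtr0_sg ?mul1e ?invr_gt0 ?ha_pos //.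
  by rewrite leNye.
near: T; by exists 1%N.
Unshelve. all: by end_near. Qed.
End P12.
Section A.
Variables (R : realType) (n d : nat).

Lemma simplex_le1 (P : 'rV[R]_d) j : (forall i, 0 <= P ord0 i) -> \sum_i P ord0 i = 1 -> P ord0 j <= 1.
Proof.
move=> P0 P1; rewrite -P1 (bigD1 j) //= lerDl.
by apply: sumr_ge0 => i _.
Qed.

Lemma prod_le (P : 'rV[R]_d) j : (forall i, 0 <= P ord0 i) -> \sum_i P ord0 i = 1 ->
  \prod_i P ord0 i <= P ord0 j.
Proof.
move=> P0 P1; rewrite (bigD1 j) //= ler_piMr //.
by apply: prodr_ile1 => i _; rewrite P0 simplex_le1.
Qed.

Lemma claimA (l : 'rV[R]_n -> 'I_d -> R) (a : nat -> R) (ha_pos : forall T, (0 < T)%N -> 0 < a T)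
  (haT : (fun T : nat => a T / T%:R) @ \oo --> +oo)
  (chat : predictor R n d) (xhat : prescriptor R n d) :
  oos_guarantee l a chat xhat -> forall P, simplex_int P ->
  \forall T \near \oo, forall s : {ffun 'I_T -> 'I_d},
     cost l (xhat T (empirical R s)) P <= chat_star chat xhat (empirical R s) T.
Proof.
move=> hg P hP; have [P0 P1] := hP.
have P0' : forall i, 0 <= P ord0 i by move=> i; apply/ltW.
set pm := \prod_i P ord0 i.
have pm0 : 0 < pm by apply: prodr_gt0.
have hlt : (limn_esup (fun T : nat =>
       ((a T)^-1)%:E *
       elog (probT P (fun s : {ffun 'I_T -> 'I_d} =>
               (cost l (xhat T (empirical R s)) P >
                chat_star chat xhat (empirical R s) T)%R))) < (- (1/2))%:E)%E.
  by apply: le_lt_trans (hg P hP) _; rewrite lte_fin; lra.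
have h1 := esup_lt hlt.
have h2 : \forall T \near \oo, - 2 * ln pm < a T / T%:R by move: haT => /cvgryPgt; apply.
have [N1 _ hN1] := h1. have [N2 _ hN2] := h2.
exists (maxn 1 (maxn N1 N2)) => // T /=; rewrite !geq_max => /and3P[T0 TN1 TN2] s.
rewrite leNgt; apply/negP => hs.
have aT0 := ha_pos _ T0.
have TR0 : 0 < T%:R :> R by rewrite ltr0n.
set E := (fun s : {ffun 'I_T -> 'I_d} => (cost l (xhat T (empirical R s)) P >
                chat_star chat xhat (empirical R s) T)%R).
have hp : pm ^+ T <= probT P E.
  rewrite /probT (bigD1 s) //=.
  apply: le_trans (_ : \prod_(t < T) P ord0 (s t) <= _); last first.
    by rewrite lerDl; apply: sumr_ge0 => s' _; apply: prodr_ge0.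
  have -> : pm ^+ T = \prod_(t < T) pm by rewrite prodr_const card_ord.
  by apply: ler_prod => t _; rewrite ltW //= prod_le.
have pT0 : 0 < pm ^+ T by apply: exprn_gt0.
have p0 : 0 < probT P E by apply: lt_le_trans hp.
have hT2 := hN2 T TN2.
move: (hN1 T TN1); rewrite /elog -/E gt_eqF // -EFinM lte_fin => hT1.
have hln : ln pm *+ T <= ln (probT P E) by rewrite -lnXn // ler_ln // posrE.
rewrite -mulr_natr in hln.
rewrite mulrC ltr_pdivrMr // in hT1.
rewrite ltr_pdivlMr // in hT2.
nra.
Qed.
End A.
Section U.
Variables (R : realType) (n d : nat).
Lemma unifP (X : set 'rV[R]_n) (hXc : compact X) (chat : predictor R n d)
  (heq : equicont X chat) P (hP : simplex P) eps (e0 : 0 < eps) :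
  exists2 delta, 0 < delta & forall Q, simplex Q -> `|Q - P| < delta ->
    forall y T, X y -> `|chat y P T - chat y Q T| < eps.
Proof.
have hyp : forall x, X x -> \forall y \near x & Q \near nbhs P,
    (X y -> simplex Q -> forall T, `|chat y P T - chat y Q T| < eps).
  move=> x Xx.
  have e2 : 0 < eps / 2 by rewrite divr_gt0.
  have [delta d0 Hd] := heq x P Xx hP _ e2.
  near=> y Q => Xy sQ T.
  have hy : `|y - x| < delta.
    have : ball x delta y by near: y; apply: nbhsx_ballx.
    by rewrite -ball_normE /ball_ /= distrC.
  have hQ : `|Q - P| < delta.
    have : ball P delta Q by near: Q; apply: nbhsx_ballx.
    by rewrite -ball_normE /ball_ /= distrC.
  have h1 := Hd y Q Xy sQ hy hQ T.
  have h2 := Hd y P Xy hP hy; rewrite subrr normr0 in h2; have {h2} h2 := h2 d0 T.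
  rewrite (_ : chat y P T - chat y Q T = (chat x P T - chat y Q T) - (chat x P T - chat y P T)); last by ring.
  apply: le_lt_trans (ler_normB _ _) _.
  lra.
have Hn := (compact_near_coveringP X).1 hXc _ (nbhs P)
  (fun Q y => X y -> simplex Q -> forall T, `|chat y P T - chat y Q T| < eps) _ hyp.
have [delta d0 Hd] := (nbhs_ballP P _).1 (Hn _).
exists delta => // Q sQ hQ y T Xy.
apply: Hd => //; by rewrite -ball_normE /ball_ /= distrC.
Unshelve. all: by end_near. Qed.
End U.
Section E.
Variables (R : realType) (d : nat).
Lemma card_cnt T (s : {ffun 'I_T -> 'I_d}) i :
  #|[set t | s t == i]| = count (pred1 i) [seq s t | t <- enum 'I_T].
Proof.
rewrite count_map cardE {1}/enum_mem size_filter -enumT.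
by apply: eq_count => t; apply/asboolP/idP.
Qed.

Lemma sum_cnt (sq : seq 'I_d) : (\sum_i count (pred1 i) sq = size sq)%N.
Proof.
elim: sq => [|x sq IH] /=; first by rewrite big1.
by rewrite big_split /= IH (bigD1 x) //= eqxx big1 // => i /negbTE; rewrite eq_sym => ->.
Qed.

Lemma emp_simplex T (s : {ffun 'I_T -> 'I_d}) : (0 < T)%N -> simplex (empirical R s).
Proof.
move=> T0; split => [i|]; first by rewrite mxE divr_ge0.
under eq_bigr do rewrite mxE.
rewrite -mulr_suml -natr_sum.
under eq_bigr do rewrite card_cnt.
by rewrite sum_cnt size_map size_enum_ord divff // pnatr_eq0 -lt0n.
Qed.
End E.
Section C.
Variables (R : realType) (d : nat).
Lemma emp_approx (P : 'rV[R]_d.+1) : simplex P -> forall delta, 0 < delta ->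
  \forall T \near \oo, exists s : {ffun 'I_T -> 'I_d.+1}, `|empirical R s - P| < delta.
Proof.
move=> [P0 P1] delta d0.
set D := d.+1.
have DR0 : 0 < D%:R :> R by rewrite ltr0n.
exists (Num.Def.trunc (D%:R / delta)).+1 => // T /= hT.
have hT' : D%:R / delta < T%:R.
  have /andP[_ h] := truncn_itv (ltW (divr_gt0 DR0 d0)).
  by apply: lt_le_trans h _; rewrite ler_nat.
have TR0 : 0 < T%:R :> R by apply: le_lt_trans hT'; rewrite divr_ge0 // ltW.
set k := fun i : 'I_D => Num.Def.trunc (T%:R * P ord0 i).
have hk : forall i, (k i)%:R <= T%:R * P ord0 i < (k i)%:R + 1.
  by move=> i; rewrite natr1; apply: truncn_itv; rewrite mulr_ge0 // ltW.
set K := (\sum_i k i)%N.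
have KT : (K <= T)%N.
  rewrite -(ler_nat R) /K natr_sum.
  apply: (@le_trans _ _ (\sum_i T%:R * P ord0 i)).
    by apply: ler_sum => i _; have /andP[] := hk i.
  by rewrite -mulr_sumr P1 mulr1.
have TK : (T - K)%:R < D%:R :> R.
  rewrite natrB // ltrBlDr.
  apply: (@le_lt_trans _ _ (\sum_i T%:R * P ord0 i)).
    by rewrite -mulr_sumr P1 mulr1.
  rewrite addrC /K natr_sum (_ : D%:R = \sum_(i < D) (1:R)); last by rewrite sumr_const card_ord.
  rewrite -big_split /=.
  apply: ltr_sum => [|i _]; first by apply/hasP; exists ord0; rewrite ?mem_index_enum.
  by have /andP[_] := hk i; rewrite addrC.
set k' := fun i : 'I_D => (k i + (i == ord0) * (T - K))%N.
set sq := flatten [seq nseq (k' i) i | i <- enum 'I_D].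
have cnt : forall j, count (pred1 j) sq = k' j.
  move=> j; rewrite /sq count_flatten -map_comp sumnE big_map big_enum /=.
  rewrite (bigD1 j) //= count_nseq /= eqxx mul1n big1 ?addn0 // => i /negbTE.
  by rewrite count_nseq /= eq_sym => ->.
have hsz : size sq = T.
  rewrite -sum_cnt; under eq_bigr do rewrite cnt.
  rewrite /k' big_split /= -/K (bigD1 ord0) //= mul1n big1 ?addn0 ?subnKC //.
  by move=> i /negbTE ->.
exists [ffun t : 'I_T => nth ord0 sq t].
change (mx_norm (empirical R [ffun t : 'I_T => nth ord0 sq t] - P) < delta).
rewrite mx_normrE; apply: bigmax_lt => // [[i j]] _ /=.
rewrite (ord1 i) !mxE card_cnt.
have -> : [seq [ffun t : 'I_T => nth ord0 sq t] t | t <- enum 'I_T] = sq.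
  rewrite -[RHS](mkseq_nth ord0 sq) hsz /mkseq -val_enum_ord -map_comp.
  by apply: eq_map => t; rewrite /= ffunE.
rewrite cnt.
have h1 : `|(k' j)%:R - T%:R * P ord0 j| <= D%:R.
  have /andP[h1 h2] := hk j.
  rewrite /k' natrD natrM.
  have e0 : 0 <= (j == ord0)%:R * (T - K)%:R :> R by rewrite mulr_ge0.
  have e1 : (j == ord0)%:R * (T - K)%:R <= D%:R :> R.
    apply: le_trans (_ : (T - K)%:R <= _); last exact: ltW.
    by rewrite ler_piMl // lern1 leq_b1.
  have D1 : (1 : R) <= D%:R by rewrite ler1n.
  rewrite ler_norml; apply/andP; split; lra.
rewrite (_ : (k' j)%:R / T%:R - P ord0 j = ((k' j)%:R - T%:R * P ord0 j) / T%:R); last first.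
  by field; rewrite gt_eqF.
rewrite normrM [`|T%:R^-1|]ger0_norm ?invr_ge0 ?ltW //.
apply: le_lt_trans (_ : D%:R / T%:R < _).
  by rewrite ler_pM2r ?invr_gt0.
by rewrite ltr_pdivrMr // mulrC -ltr_pdivrMr.
Qed.
End C.
Section L.
Variables (R : realType) (n d : nat).
Lemma lowerB (X : set 'rV[R]_n) (hXc : compact X) (l : 'rV[R]_n -> 'I_d.+1 -> R)
  (hl : forall i, {within X, continuous (fun x => l x i)})
  (a : nat -> R) (ha_pos : forall T, (0 < T)%N -> 0 < a T)
  (haT : (fun T : nat => a T / T%:R) @ \oo --> +oo)
  (chat : predictor R n d.+1) (xhat : prescriptor R n d.+1)
  (hpp : pp_pair X chat xhat) (hg : oos_guarantee l a chat xhat)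
  (m : R) (hm : forall y, X y -> m <= maxloss l y) P (hP : simplex P) eps (e0 : 0 < eps) :
  \forall T \near \oo, m - eps <= chat_star chat xhat P T.
Proof.
have [[_ [heq _]] hmin] := hpp.
set D := d.+1.
have DR0 : 0 < D%:R :> R by rewrite ltr0n.
have [M [M0 HM]] := bound_all hXc hl.
set y := eps / (4 * M + 4 + 2 * eps).
have y0 : 0 < y by rewrite divr_gt0 //; lra.
have hy : y * (4 * M + 4 + 2 * eps) = eps by rewrite /y mulfVK //; lra.
have y1 : y < 1 by nra.
have yM : 4 * y * M <= eps by nra.
set eta := y / D%:R.
have eta0 : 0 < eta by rewrite divr_gt0.
have Deta : D%:R * eta = y by rewrite /eta mulrC mulfVK // gt_eqF.
set P' := fun i : 'I_D => \row_(j < D) (eta + (j == i)%:R * (1 - D%:R * eta)).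
have hP' : forall i, simplex_int (P' i).
  move=> i; split => [j|]; first by rewrite mxE; apply: ltr_pwDl => //; rewrite mulr_ge0 //; lra.
  under eq_bigr do rewrite mxE.
  rewrite big_split /= sumr_const card_ord (bigD1 i) //= eqxx mul1r big1 ?addr0.
    by rewrite -mulr_natl; ring.
  by move=> j /negbTE ->; rewrite mul0r.
have hcost : forall x i, X x -> l x i <= cost l x (P' i) + eps / 2.
  move=> x i Xx; rewrite /cost.
  under eq_bigr do rewrite mxE mulrDr.
  rewrite big_split /= [X in _ + X + _](bigD1 i) //= eqxx mul1r [\sum_(j < D | j != i) _]big1 ?addr0; last first.
    by move=> j /negbTE ->; rewrite mul0r mulr0.
  have hs : `|\sum_j l x j * eta| <= D%:R * M * eta.
    apply: le_trans (ler_norm_sum _ _ _) _.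
    apply: le_trans (_ : \sum_(j < D) M * eta <= _).
      by apply: ler_sum => j _; rewrite normrM (gtr0_norm eta0); apply: ler_wpM2r; [exact: ltW | exact: HM].
    by rewrite sumr_const card_ord -mulr_natl; rewrite le_eqVlt; apply/orP; left; apply/eqP; rewrite /eta; ring.
  have hl1 := HM x i Xx.
  have e1 : l x i * (D%:R * eta) <= M * y.
    by rewrite Deta; apply: ler_wpM2r; [exact: ltW | move: hl1; rewrite ler_norml => /andP[]].
  have e2 : - (M * y) <= \sum_j l x j * eta.
    move: hs; rewrite ler_norml => /andP[h _]; rewrite -Deta; lra.
  rewrite Deta in e1 *.
  rewrite mulrBr mulr1; nra.
have hA : \forall T \near \oo, forall i (s : {ffun 'I_T -> 'I_D}),
     cost l (xhat T (empirical R s)) (P' i) <= chat_star chat xhat (empirical R s) T.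
  apply: (@filter_forall _ _ (fun i T => forall (s : {ffun 'I_T -> 'I_D}),
     cost l (xhat T (empirical R s)) (P' i) <= chat_star chat xhat (empirical R s) T) \oo _) => i.
  exact: (claimA ha_pos haT hg (hP' i)).
have e2 : 0 < eps / 2 by rewrite divr_gt0.
have [delta d0 Hd] := unifP hXc heq hP e2.
have hE := emp_approx hP d0.
near=> T.
have T0 : (0 < T)%N by near: T; exists 1%N.
have [s hs] : exists s : {ffun 'I_T -> 'I_D}, `|empirical R s - P| < delta by near: T; exact: hE.
set Q := empirical R s.
have sQ : simplex Q := emp_simplex R s T0.
have [XQ minQ] := hmin Q T sQ.
have [XP minP] := hmin P T hP.
have hAT := near hA T.
have h1 : m <= chat_star chat xhat Q T + eps / 2.
  apply: le_trans (hm _ XQ) _; have [i' ->] := maxloss_attain l (xhat T Q).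
  apply: le_trans (hcost _ i' XQ) _; rewrite lerD2r; exact: hAT.
have h2 := Hd Q sQ hs (xhat T P) T XP.
have h3 := minQ _ XP.
rewrite /chat_star in h1 *.
move: h2; rewrite ltr_norml => /andP[h2 _].
lra.
Unshelve. all: by end_near. Qed.
End L.
Unset Implicit Arguments. Set Strict Implicit.
Theorem mainTheorem13 (R : realType) (n d : nat) (hd : (1 < d)%N)
  (X : set 'rV[R]_n) (hXc : compact X)
  (l : 'rV[R]_n -> 'I_d -> R)
  (hl : forall i, {within X, continuous (fun x => l x i)})
  (a : nat -> R) (ha_pos : forall T, (0 < T)%N -> 0 < a T)
  (ha_inf : a @ \oo --> +oo)
  (haT : (fun T : nat => a T / T%:R) @ \oo --> +oo)
  (xR : prescriptor R n d)
  (hxR : forall T P, X (xR T P) /\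
           forall y, X y -> maxloss l (xR T P) <= maxloss l y) :
  let cR : predictor R n d := fun x _ _ => maxloss l x in
  pp_pair X cR xR /\ oos_guarantee l a cR xR /\
  forall (chat : predictor R n d) (xhat : prescriptor R n d),
    pp_pair X chat xhat -> oos_guarantee l a chat xhat ->
    pp_le X l cR xR chat xhat.
Proof.
have [d' ed] : exists d', d = d'.+1 by exists d.-1; rewrite prednK // (ltn_trans _ hd).
subst d => cR.
split; first exact: part1.
split; first exact: part2.
move=> chat xhat hpp hg P hP.
have sP : simplex P by case: hP => h1 h2; split => // i; apply/ltW.
have X0 := (hxR 0%N P).1.
set m := maxloss l (xR 0%N P).
have hm : forall y, X y -> m <= maxloss l y := (hxR 0%N P).2.
have hmT : forall T, chat_star cR xR P T = m.
  move=> T; apply/le_anti/andP; split; last exact: hm (hxR T P).1.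
  exact: (hxR T P).2 _ X0.
set c := cstar X l P.
have [M [M0 HM]] := bound_all hXc hl.
have hcm : c <= m.
  have hlb : has_lbound [set cost l x P | x in X].
    exists (- M) => _ [x Xx <-]; rewrite /cost.
    apply: le_trans (_ : \sum_i (- M) * P ord0 i <= _).
      by rewrite -mulr_sumr sP.2 mulr1.
    apply: ler_sum => i _; apply: ler_wpM2r; first exact: sP.1.
    by have := HM x i Xx; rewrite ler_norml => /andP[].
  apply: le_trans (ge_inf hlb _) _; first by exists (xR 0%N P).
  exact: cost_le_max.
have [D0|D0] := eqVneq m c.
  apply: esup_le; apply: nearW => T.
  rewrite hmT D0 subrr normr0 /eratio eqxx; case: ifP => _ //.
  by rewrite mul0r lee_fin.
have Dn0 : 0 < m - c by rewrite subr_gt0 lt_neqAle eq_sym D0 hcm.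
apply/lee_addgt0Pr => e e0; apply: esup_le.
set Dn := m - c.
set eps := Dn * e / (1 + e).
have e1 : 0 < 1 + e by lra.
have eps0 : 0 < eps by rewrite divr_gt0 // mulr_gt0.
have heps : eps * (1 + e) = Dn * e by rewrite /eps mulfVK // gt_eqF.
have := lowerB hXc hl ha_pos haT hpp hg hm sP eps0.
apply: filterS => T hT.
rewrite hmT -/Dn (gtr0_norm Dn0) /eratio.
set v := `|chat_star chat xhat P T - c|.
have hv : Dn - eps <= v.
  apply: le_trans (ler_norm _); rewrite /Dn; lra.
have epsD : eps < Dn.
  have : eps * (1 + e) < Dn * (1 + e) by rewrite heps; nra.
  by rewrite ltr_pM2r.
have v0 : 0 < v by lra.
rewrite gt_eqF // -EFinD lee_fin ler_pdivrMr // -/Dn.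
have h := ler_wpM2l (ltW e1) hv.
have -> : Dn = (1 + e) * (Dn - eps) by rewrite mulrBr [(1+e)*eps]mulrC heps; ring.
exact: h.
Qed.
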